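(* Let $(G=(V,E),\sigma)$ be a properly $n$-colored graph containing a hub-vertex $x$. If $F$ is an optimal RBMG deletion set (resp. optimal RBMG edit set) for $(G,\sigma)$, then $F$ contains no pair of the form $xv$ with $v\in V$.
   Context: All graphs are finite, simple and undirected; $G\setminus F=(V,E\setminus F)$, $G\triangle F=(V,E\triangle F)$. A vertex coloring is a surjective map $\sigma:V\to S$; properly $n$-colored means adjacent vertices get distinct colors and $|S|=n$. A hub-vertex of $G$ is a vertex adjacent to all other vertices. A phylogenetic tree $T$ on $L$ is a rooted tree with leaf set $L$ whose inner vertices other than the root have degree at least three; $u\preceq_T v$ means $v$ lies on the root-to-$u$ path; $\mathrm{lca}_T$ is last common ancestor. For surjective $\sigma:L\to S$, $y$ is a best match of $x$ if $\sigma(x)\neq\sigma(y)$ and $\mathrm{lca}_T(x,y)\preceq_T\mathrm{lca}_T(x,y')$ for all $y'$ with $\sigma(y')=\sigma(y)$; $G(T,\sigma)$ is the graph on $L$ whose edges are the reciprocal best match pairs. A properly colored $(G,\sigma)$ is an RBMG if $G(T,\sigma)=(G,\sigma)$ for some $(T,\sigma)$; an $n$-RBMG if exactly $n$ colors are used. For a properly $n$-colored $(G,\sigma)$, $F\subseteq E$ is an (RBMG) deletion set if $(G\setminus F,\sigma)$ is an $n$-RBMG, and $F\subseteq\binom{V}{2}$ is an edit set if $(G\triangle F,\sigma)$ is an $n$-RBMG; such a set is optimal if it has minimum cardinality among all deletion (resp. edit) sets. *)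

(* Defs.v *)
From mathcomp Require Import all_boot.
Set Implicit Arguments. Unset Strict Implicit. Unset Printing Implicit Defensive.

(* A finite simple graph on vertex type V is given by its edge set
   E : {set {set V}}, every edge being a 2-element subset of V.
   The pair xy is the set [set x; y]. *)
Definition simple_edges (V : finType) (E : {set {set V}}) : Prop :=
  forall e, e \in E -> #|e| = 2.

Definition adj (V : finType) (E : {set {set V}}) (x y : V) : Prop :=
  [set x; y] \in E.

Definition proper_coloring (V S : finType) (E : {set {set V}}) (sigma : V -> S) : Prop :=
  forall x y, adj E x y -> sigma x <> sigma y.

Definition properly_n_colored (V S : finType) (E : {set {set V}}) (sigma : V -> S)
  (n : nat) : Prop :=
  proper_coloring E sigma /\ (forall s : S, exists x, sigma x = s) /\ #|S| = n.

Definition hub_vertex (V : finType) (E : {set {set V}}) (x : V) : Prop :=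
  forall v, v <> x -> adj E x v.

Definition rooted_tree (N : finType) (root : N) (par : N -> N) : Prop :=
  par root = root /\ forall u, exists k, iter k par u = root.

Definition is_child (N : finType) (root : N) (par : N -> N) (u v : N) : bool :=
  (u != root) && (par u == v).

Definition nchildren (N : finType) (root : N) (par : N -> N) (v : N) : nat :=
  #|[set u | is_child root par u v]|.

Definition is_leaf (N : finType) (root : N) (par : N -> N) (v : N) : bool :=
  nchildren root par v == 0.

(* phylogenetic tree on leaf set V: leaves are labelled bijectively by lf;
   every inner vertex other than the root has degree >= 3, i.e. (counting
   its parent edge) at least two children. *)
Definition phylo_tree (V N : finType) (root : N) (par : N -> N) (lf : V -> N) : Prop :=
  [/\ rooted_tree root par,
      injective lf,
      (forall v, is_leaf root par v <-> exists x, lf x = v) &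
      (forall v, v <> root -> ~~ is_leaf root par v -> 2 <= nchildren root par v)].

Definition anc (N : finType) (par : N -> N) (u v : N) : Prop :=
  exists k, iter k par u = v.

Definition is_lca (N : finType) (par : N -> N) (a b w : N) : Prop :=
  [/\ anc par a w, anc par b w &
      forall w', anc par a w' -> anc par b w' -> anc par w w'].

Definition best_match (V N S : finType) (par : N -> N) (lf : V -> N) (sigma : V -> S)
  (x y : V) : Prop :=
  sigma x <> sigma y /\
  forall y', sigma y' = sigma y ->
    forall w w', is_lca par (lf x) (lf y) w -> is_lca par (lf x) (lf y') w' ->
      anc par w w'.

Definition reciprocal_best_match (V N S : finType) (par : N -> N) (lf : V -> N)
  (sigma : V -> S) (x y : V) : Prop :=
  best_match par lf sigma x y /\ best_match par lf sigma y x.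

Definition is_RBMG (V S : finType) (E : {set {set V}}) (sigma : V -> S) : Prop :=
  proper_coloring E sigma /\
  exists (N : finType) (root : N) (par : N -> N) (lf : V -> N),
    phylo_tree root par lf /\
    forall x y, adj E x y <-> reciprocal_best_match par lf sigma x y.

Definition is_nRBMG (V S : finType) (E : {set {set V}}) (sigma : V -> S) (n : nat) : Prop :=
  is_RBMG E sigma /\ #|[set sigma x | x in V]| = n.

Definition deletion_set (V S : finType) (E : {set {set V}}) (sigma : V -> S) (n : nat)
  (F : {set {set V}}) : Prop :=
  F \subset E /\ is_nRBMG (E :\: F) sigma n.

Definition edit_set (V S : finType) (E : {set {set V}}) (sigma : V -> S) (n : nat)
  (F : {set {set V}}) : Prop :=
  (forall e, e \in F -> #|e| = 2) /\ is_nRBMG ((E :\: F) :|: (F :\: E)) sigma n.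

Definition optimal_deletion_set (V S : finType) (E : {set {set V}}) (sigma : V -> S)
  (n : nat) (F : {set {set V}}) : Prop :=
  deletion_set E sigma n F /\
  forall F', deletion_set E sigma n F' -> #|F| <= #|F'|.

Definition optimal_edit_set (V S : finType) (E : {set {set V}}) (sigma : V -> S)
  (n : nat) (F : {set {set V}}) : Prop :=
  edit_set E sigma n F /\
  forall F', edit_set E sigma n F' -> #|F| <= #|F'|.

(* Main.v *)
Require Import Defs.
From mathcomp Require Import all_boot.
From Stdlib Require Import Setoid.
Set Implicit Arguments. Unset Strict Implicit. Unset Printing Implicit Defensive.


Lemma iter_fix (N : Type) (f : N -> N) u k : f u = u -> iter k f u = u.
Proof. by move=> H; elim: k => //= k ->. Qed.

Lemma anc_refl (N : finType) (par : N -> N) u : anc par u u.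
Proof. by exists 0. Qed.

Lemma anc_trans (N : finType) (par : N -> N) u v w :
  anc par u v -> anc par v w -> anc par u w.
Proof. by move=> [k Hk] [m Hm]; exists (m + k); rewrite iterD Hk. Qed.

Lemma anc_par (N : finType) (par : N -> N) u : anc par u (par u).
Proof. by exists 1. Qed.

Lemma anc_root (N : finType) (r : N) par u : rooted_tree r par -> anc par u r.
Proof. by case=> _ H; apply: H. Qed.

Lemma anc_antisym (N : finType) (r : N) par u v :
  rooted_tree r par -> anc par u v -> anc par v u -> u = v.
Proof.
move=> [Hr Hreach] [k Hk] [m Hm].
have per : forall j, iter (j * (m + k)) par u = u.
  elim=> [//|j IH]; by rewrite mulSn iterD IH iterD Hk Hm.
case: (Hreach u) => J HJ.
case: (posnP (m + k)) => Hmk.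
  move/eqP: Hmk; rewrite addn_eq0 => /andP [/eqP Em /eqP Ek].
  by rewrite Ek in Hk.
have HJr : forall i, iter (i + J) par u = r by move=> i; rewrite iterD HJ iter_fix.
have Hu : u = r.
  rewrite -(per J).
  have -> : J * (m + k) = (J * (m + k) - J) + J.
    by rewrite subnK // leq_pmulr.
  exact: HJr.
by rewrite -Hk Hu iter_fix.
Qed.

Lemma par_neq (N : finType) (r : N) par u :
  rooted_tree r par -> u != r -> par u != u.
Proof.
move=> [Hr Hreach] Hu; apply/eqP => Hp.
case: (Hreach u) => k; rewrite iter_fix // => E; by rewrite E eqxx in Hu.
Qed.

Lemma leaf_char (N : finType) (r : N) par v :
  is_leaf r par v <-> forall u, u != r -> par u != v.
Proof.
rewrite /is_leaf /nchildren cards_eq0; split.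
  move=> /eqP H u Hu; apply/negP => /eqP Hp.
  have : u \in [set u | is_child r par u v] by rewrite inE /is_child Hu Hp eqxx.
  by rewrite H inE.
move=> H; apply/eqP/setP => u; rewrite !inE /is_child.
by case: (u =P r) => //= /eqP Hu; apply/negP => /eqP; apply/eqP/H.
Qed.

Lemma leaf_avoid (N : finType) (r : N) par l u k :
  par r = r -> is_leaf r par l -> u != l -> iter k par u != l.
Proof.
move=> Hr /leaf_char Hl Hu; elim: k => [//|k IH] /=.
have [E|Hn] := eqVneq (iter k par u) r.
  by rewrite E Hr -E.
exact: Hl.
Qed.

Lemma anc_leaf (N : finType) (r : N) par l u :
  par r = r -> is_leaf r par l -> anc par u l -> u = l.
Proof.
move=> Hr Hl [k Hk]; apply/eqP; apply/negPn/negP => Hu.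
by move: (leaf_avoid k Hr Hl Hu); rewrite Hk eqxx.
Qed.

Lemma child_lemma (N : finType) (par : N -> N) a u :
  anc par a u -> a != u -> exists v, [/\ par v = u, anc par a v & v != u].
Proof.
move=> [k Hk]; elim: k a Hk => [|k IH] a; first by move=> /= ->; rewrite eqxx.
rewrite iterSr => Hk Ha.
case: (par a =P u) => Hp; first by exists a; split => //; exact: anc_refl.
have [v [H1 H2 H3]] := IH (par a) Hk (introN eqP Hp).
by exists v; split => //; apply: anc_trans H2; exact: anc_par.
Qed.

Definition LE (V N : finType) (par : N -> N) (lf : V -> N) (a b c : V) : Prop :=
  forall w w', is_lca par (lf a) (lf b) w -> is_lca par (lf a) (lf c) w' -> anc par w w'.

Definition pretree (V N : finType) (root : N) (par : N -> N) (lf : V -> N) : Prop :=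
  [/\ rooted_tree root par, injective lf &
      forall v, is_leaf root par v <-> exists x, lf x = v].

Notation csub u := {v | v != u}.
Definition cpp (M : finType) (par : M -> M) (u w : M) : M :=
  if par w == u then par u else par w.
Definition cpar (M : finType) (par : M -> M) (u : M) (v : csub u) : csub u :=
  insubd v (cpp par u (val v)).

Lemma contract (V M : finType) (r : M) par (lf : V -> M) u c :
  pretree r par lf -> u != r -> [set w | is_child r par w u] = [set c] ->
  exists (M' : finType) (r' : M') (par' : M' -> M') (lf' : V -> M'),
    [/\ #|M'| < #|M|, pretree r' par' lf' &
        forall a b d, LE par' lf' a b d <-> LE par lf a b d].
Proof.
move=> [Hrt Hinj Hleaf] Hur Hch.
have Hrt' := Hrt; case: Hrt' => Hr Hreach.
have ru : r != u by rewrite eq_sym.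
have Hc : c \in [set w | is_child r par w u] by rewrite Hch set11.
move: Hc; rewrite inE /is_child => /andP [cr /eqP pc].
have puu : par u != u := par_neq Hrt Hur.
have cu : c != u by apply/eqP => E; move: puu; rewrite -{1}E pc eqxx.
have Hchild : forall w, w != r -> par w = u -> w = c.
  move=> w wr pw; have : w \in [set w | is_child r par w u] by rewrite inE /is_child wr pw eqxx.
  by rewrite Hch inE => /eqP.
have ppn : forall w, cpp par u w != u.
  by move=> w; rewrite /cpp; case: ifP => // /negbT.
pose r' : csub u := Sub r ru.
have vpar : forall v : csub u, val (cpar par v) = cpp par u (val v).
  by move=> v; rewrite /cpar val_insubd ppn.
have lfu : forall a, lf a != u.
  move=> a; have /leaf_char Hl : is_leaf r par (lf a) by apply/Hleaf; exists a.
  by rewrite -pc eq_sym; apply: Hl.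
pose lf' (a : V) : csub u := insubd r' (lf a).
have vlf : forall a, val (lf' a) = lf a by move=> a; rewrite /lf' val_insubd lfu.
have anc_pp : forall w, anc par w (cpp par u w).
  move=> w; rewrite /cpp; case: ifP => [/eqP E|_]; last exact: anc_par.
  by apply: anc_trans (anc_par _ _) _; rewrite E; exact: anc_par.
have Hanc : forall v w : csub u, anc (@cpar M par u) v w <-> anc par (val v) (val w).
  move=> v w; split.
    move=> [k <-]; elim: k => [|k IH]; first exact: anc_refl.
    by rewrite iterS vpar; apply: anc_trans IH _; exact: anc_pp.
  move=> [k Hk]; elim/ltn_ind: k v Hk => -[|k] IH v.
    by move=> /= E; exists 0; apply: val_inj.
  rewrite iterSr; case: (par (val v) =P u) => Pv.
    case: k IH => [|k] IH; first by rewrite /= Pv => E; move: (valP w) => /=; rewrite -E eqxx.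
    rewrite iterSr Pv => Hk.
    pose z : csub u := insubd v (par u).
    have vz : val z = par u by rewrite /z val_insubd puu.
    have := IH k (ltnW (ltnSn _)) z; rewrite vz => /(_ Hk) [j Hj].
    exists j.+1; rewrite iterSr.
    have -> : cpar par v = z by apply: val_inj; rewrite vpar vz /cpp Pv eqxx.
    exact: Hj.
  move=> Hk.
  pose z : csub u := insubd v (par (val v)).
  have vz : val z = par (val v) by rewrite /z val_insubd; move/eqP: Pv => ->.
  have := IH k (ltnSn _) z; rewrite vz => /(_ Hk) [j Hj].
  exists j.+1; rewrite iterSr.
  have -> : cpar par v = z by apply: val_inj; rewrite vpar vz /cpp; move/eqP: Pv => /negbTE ->.
  exact: Hj.
have below : forall a, anc par (lf a) u -> anc par (lf a) c.
  move=> a Ha; have [v [pv av vu]] := child_lemma Ha (lfu a).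
  have vr : v != r by apply/eqP => E; move: pv; rewrite E Hr => /eqP; rewrite eq_sym (negbTE Hur).
  by rewrite -(Hchild v vr pv).
pose c' : csub u := Sub c cu.
have L1 : forall a b w0, is_lca par (lf a) (lf b) w0 -> w0 != u.
  move=> a b w0 [H1 H2 H3]; apply/eqP => E; subst w0.
  have := H3 c (below a H1) (below b H2) => H4.
  have := anc_antisym Hrt H4 (eq_ind_r (fun z => anc par c z) (anc_par par c) (esym pc)).
  by move=> E; move: (cu); rewrite E eqxx.
have L2 : forall a b (w : csub u), is_lca (@cpar M par u) (lf' a) (lf' b) w <-> is_lca par (lf a) (lf b) (val w).
  move=> a b w; split.
    move=> [H1 H2 H3]; move/Hanc: H1; move/Hanc: H2; rewrite !vlf => H2 H1; split => // w'' A1 A2.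
    case: (w'' =P u) => Ew.
      subst w''.
      have /Hanc : anc (@cpar M par u) w c' by apply: H3; apply/Hanc; rewrite vlf; exact: below.
      by move=> /= H; apply: anc_trans H _; rewrite -pc; exact: anc_par.
    pose z : csub u := Sub w'' (introN eqP Ew).
    have /Hanc : anc (@cpar M par u) w z by apply: H3; apply/Hanc; rewrite vlf.
    by [].
  move=> [H1 H2 H3]; split; try (apply/Hanc; rewrite vlf //).
  move=> w'' /Hanc A1 /Hanc A2; apply/Hanc; apply: H3; by rewrite -vlf.
exists (csub u), r', (@cpar M par u), lf'; split.
- rewrite card_sig; apply: proper_card; apply/properP; split.
    by apply/subsetP.
  by exists u; rewrite ?inE ?eqxx.
- split.
  + split; first by apply: val_inj; rewrite vpar /= /cpp Hr (negbTE ru).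
    by move=> v; apply/Hanc; exact: anc_root Hrt.
  + by move=> a b E; apply: Hinj; rewrite -!vlf E.
  + move=> w; rewrite leaf_char.
    have -> : (forall v, v != r' -> cpar par v != w) <-> is_leaf r par (val w).
      rewrite leaf_char; split => H v vr.
        case: (v =P u) => Ev.
          subst v; apply/eqP => E.
          have := H c'; rewrite -(inj_eq val_inj) /= cr => /(_ isT).
          by rewrite -(inj_eq val_inj) vpar /= /cpp pc eqxx E eqxx.
        pose z : csub u := Sub v (introN eqP Ev).
        apply/eqP => E.
        have := H z; rewrite -(inj_eq val_inj) /= vr => /(_ isT).
        rewrite -(inj_eq val_inj) vpar /= /cpp E.
        by rewrite (negbTE (valP w)) eqxx.
      move: vr; rewrite -(inj_eq val_inj) /= => vr.
      rewrite -(inj_eq val_inj) vpar /cpp; case: ifP => _.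
        by apply: H.
      by apply: H.
    rewrite Hleaf; split => -[a Ha]; exists a.
      by apply: val_inj; rewrite vlf.
    by rewrite -vlf Ha.
- move=> a b d; split => H w0 w1 Hw0 Hw1.
    pose W0 : csub u := Sub w0 (L1 _ _ _ Hw0).
    pose W1 : csub u := Sub w1 (L1 _ _ _ Hw1).
    have := H W0 W1; rewrite !L2 /= => /(_ Hw0 Hw1) /Hanc.
    by [].
  move: Hw0 Hw1; rewrite !L2 => Hw0 Hw1; apply/Hanc; exact: H.
Qed.

Lemma normalize (V : finType) n : forall (M : finType) (r : M) par (lf : V -> M),
  #|M| = n -> pretree r par lf ->
  exists (N : finType) (r' : N) (par' : N -> N) (lf' : V -> N),
    phylo_tree r' par' lf' /\ forall a b d, LE par' lf' a b d <-> LE par lf a b d.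
Proof.
elim/ltn_ind: n => n IH M r par lf Hn Hp.
case: (boolP [exists v, [&& v != r, ~~ is_leaf r par v & nchildren r par v < 2]]).
  move=> /existsP [v /and3P [vr vl vn]].
  have : nchildren r par v == 1.
    by move: vl vn; rewrite /is_leaf; case: (nchildren r par v) => [|[|]].
  move=> /cards1P [c Hc].
  have [M' [r' [par' [lf' [Hcard Hp' HLE]]]]] := contract Hp vr Hc.
  have [N [r'' [par'' [lf'' [Hph HLE']]]]] := IH #|M'| (eq_ind _ (fun z => _ < z) Hcard _ Hn) M' r' par' lf' erefl Hp'.
  exists N, r'', par'', lf''; split => // a b d; rewrite HLE'; exact: HLE.
move=> Hno; exists M, r, par, lf; split => //.
case: Hp => H1 H2 H3; split => // v vr vl.
move/existsPn: Hno => /(_ v); rewrite (introN eqP vr) vl /=.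
by rewrite -leqNgt.
Qed.

Definition opar (N : finType) (par : N -> N) (r l : N) (W : option N) : option N :=
  match W with
  | None => None
  | Some u => if (u == l) || (u == r) then None else Some (par u)
  end.

Lemma iter_None (N : finType) (f : option N -> option N) k :
  f None = None -> iter k f None = None.
Proof. by move=> H; apply: iter_fix. Qed.

Lemma leaf_not_root (N : finType) (r : N) par l u :
  rooted_tree r par -> is_leaf r par l -> u != l -> l != r.
Proof.
move=> Hrt /leaf_char Hl ul; apply/eqP => E; subst l.
have [w [pw _ wr]] := child_lemma (anc_root u Hrt) ul.
by move: (Hl w wr); rewrite pw eqxx.
Qed.

Lemma surgery (V N : finType) (r : N) par (lf : V -> N) x v :
  phylo_tree r par lf -> v != x ->
  exists (M : finType) (r' : M) (par' : M -> M) (lf' : V -> M), pretree r' par' lf' /\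
   (forall a b d, a != x -> b != x -> d != x -> (LE par' lf' a b d <-> LE par lf a b d)) /\
   (forall b d, b != x -> d != x -> LE par' lf' x b d).
Proof.
move=> [Hrt Hinj Hleaf H2] vx.
have Hrt' := Hrt; case: Hrt' => Hr Hreach.
set l := lf x.
have lleaf : is_leaf r par l by apply/Hleaf; exists x.
have lfneq : forall a, a != x -> lf a != l.
  by move=> a ax; apply/eqP => /Hinj E; move: ax; rewrite E eqxx.
have lr : l != r by apply: leaf_not_root Hrt lleaf (lfneq v vx).
have Hlc := leaf_char r par l; have Hl := proj1 Hlc lleaf.
set p := par l.
have other : exists w, [/\ w != r, par w = p & w != l].
  case: (p =P r) => pr.
    have lvl : l != lf v by rewrite eq_sym lfneq.
    have [w [pw aw wr]] := child_lemma (anc_root (lf v) Hrt) (leaf_not_root Hrt (proj2 (Hleaf _) (ex_intro _ v erefl)) lvl).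
    exists w; split => //; first by rewrite pw pr.
    by apply/eqP => E; subst w; move: (anc_leaf Hr lleaf aw) => /eqP; rewrite (negbTE (lfneq v vx)).
  have pl : ~~ is_leaf r par p.
    by apply/negP => /leaf_char /(_ l lr); rewrite eqxx.
  have := H2 p (fun E => pr E) pl; rewrite /nchildren (cardsD1 l) inE /is_child lr eqxx /=.
  rewrite add1n ltnS card_gt0 => /set0Pn [w]; rewrite !inE /is_child => /andP [wl /andP [wr /eqP pw]].
  by exists w.
have [w0 [w0r pw0 w0l]] := other.
pose P := opar par r l.
have Pnone : P None = None by [].
have Psome : forall u, u != l -> u != r -> P (Some u) = Some (par u).
  by move=> u ul ur; rewrite /P /opar (negbTE ul) (negbTE ur).
have parl : forall u, u != r -> par u != l by move=> u ur; apply: Hl.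
have ancNone : forall W, anc P W None.
  case=> [u|]; last exact: anc_refl.
  case: (u =P l) => ul; first by exists 1; rewrite /= /P /opar ul eqxx.
  case: (u =P r) => ur; first by exists 1; rewrite /= /P /opar ur eqxx orbT.
  have [k Hk] := anc_root u Hrt.
  have inv : forall k u, u != l -> iter k par u = r -> anc P (Some u) None.
    elim=> [|k' IH] u' u'l.
      by move=> /= ->; exists 1; rewrite /= /P /opar eqxx orbT.
    rewrite iterSr => Hk'.
    case: (u' =P r) => u'r; first by exists 1; rewrite /= /P /opar u'r eqxx orbT.
    have [j Hj] := IH (par u') (parl _ (introN eqP u'r)) Hk'.
    exists j.+1; rewrite iterSr Psome //; exact/eqP.
  exact: inv k u (introN eqP ul) Hk.
have ancNoneSome : forall w, ~ anc P None (Some w).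
  by move=> w [k]; rewrite iter_None.
have Hanc : forall u w, u != l -> (anc P (Some u) (Some w) <-> anc par u w).
  move=> u w ul; split.
    have inv : forall k, iter k P (Some u) = None \/
        exists w', [/\ iter k P (Some u) = Some w', anc par u w' & w' != l].
      elim=> [|k IH]; first by right; exists u; split => //; exact: anc_refl.
      rewrite iterS; case: IH => [->|[w' [-> aw w'l]]]; first by left.
      case: (w' =P r) => w'r; first by left; rewrite /P /opar w'r eqxx orbT.
      right; exists (par w'); rewrite Psome //; last exact/eqP.
      split => //; first by apply: anc_trans aw (anc_par _ _).
      by apply: parl; apply/eqP.
    move=> [k Hk]; case: (inv k); rewrite Hk // => -[w' [[<-] aw _]] //.
  move=> [k Hk]; elim: k u ul Hk => [|k IH] u ul; first by move=> /= ->; exact: anc_refl.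
  rewrite iterSr => Hk.
  case: (u =P r) => ur.
    subst u; move: Hk; rewrite Hr iter_fix // => <-; exact: anc_refl.
  have [j Hj] := IH (par u) (parl _ (introN eqP ur)) Hk.
  by exists j.+1; rewrite iterSr Psome //; exact/eqP.
pose lf' (a : V) := Some (lf a).
have ancl : forall a w, a != x -> anc par (lf a) w -> w != l.
  move=> a w ax aw; apply/eqP => E; subst w.
  by move: (anc_leaf Hr lleaf aw) => /eqP; rewrite (negbTE (lfneq a ax)).
have K1 : forall a b, a != x -> b != x -> ~ is_lca P (lf' a) (lf' b) None.
  move=> a b ax bx [_ _ H3]; apply: (ancNoneSome r); apply: H3.
    by apply (proj2 (Hanc _ _ (lfneq a ax))); exact: anc_root.
  by apply (proj2 (Hanc _ _ (lfneq b bx))); exact: anc_root.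
have K2 : forall a b w, a != x -> b != x ->
    (is_lca P (lf' a) (lf' b) (Some w) <-> is_lca par (lf a) (lf b) w).
  move=> a b w ax bx; split.
    move=> [H1 H2' H3]; move/Hanc: H1 => /(_ (lfneq a ax)) H1.
    move/Hanc: H2' => /(_ (lfneq b bx)) H2'.
    split => // w'' A1 A2.
    have := H3 (Some w''); rewrite /lf' !Hanc ?lfneq //.
    by move=> /(_ A1 A2).
    exact: ancl H1.
  move=> [H1 H2' H3]; split; rewrite /lf' ?Hanc ?lfneq //.
  case=> [w''|] A1 A2; last exact: ancNone.
  rewrite Hanc; last exact: ancl H1.
  by apply: H3; move: A1 A2; rewrite !Hanc ?lfneq.
have Kx : forall b W, b != x -> is_lca P (lf' x) (lf' b) W -> W = None.
  move=> b W bx [[k Hk] H2' _]; case: k Hk => [|k].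
    move=> /= E; subst W; move: H2'; rewrite Hanc ?lfneq // => /ancl.
    by rewrite eqxx => /(_ bx).
  by rewrite iterSr /lf' /P /opar eqxx /= iter_None.
exists (option N), None, P, lf'; split; last split.
- split.
  + by split => // W; exact: ancNone.
  + by move=> a b [/Hinj].
  + case=> [w|].
      rewrite leaf_char.
      have -> : (forall U, U != None -> P U != Some w) <-> is_leaf r par w.
        rewrite leaf_char; split => H u ur.
          case: (u =P l) => ul.
            subst u; apply/eqP => E; have := H (Some w0) isT.
            by rewrite Psome // pw0 /p E eqxx.
          have := H (Some u) isT; rewrite Psome //; exact/eqP.
        case: u ur => [u|] // _; rewrite /P /opar; case: ifP => // /norP [ul ur].
        by apply/negP => /eqP [E]; move: (H u ur); rewrite E eqxx.
      rewrite Hleaf; split => -[a Ha]; exists a; first by rewrite /lf' Ha.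
      by case: Ha.
    split; last by case.
    by move/leaf_char => /(_ (Some r) isT); rewrite /P /opar eqxx orbT.
- move=> a b d ax bx dx; split => H z0 z1 Hz0 Hz1.
    have A0 : anc par (lf a) z0 by case: Hz0.
    apply: (proj1 (Hanc z0 z1 (ancl a z0 ax A0))).
    by apply: H; apply/K2.
  case: z0 Hz0 => [z0|] Hz0; last by case: (K1 a b ax bx Hz0).
  case: z1 Hz1 => [z1|] Hz1; last by case: (K1 a d ax dx Hz1).
  move/K2: Hz0 => /(_ ax bx) Hz0; move/K2: Hz1 => /(_ ax dx) Hz1.
  have A0 : anc par (lf a) z0 by case: Hz0.
  apply/(Hanc _ _ (ancl a z0 ax A0)); exact: H.
- move=> b d bx dx W0 W1 H0 H1.
  by rewrite (Kx b W0 bx H0) (Kx d W1 dx H1); exact: anc_refl.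
Qed.

Lemma LE_self (V N : finType) (par : N -> N) (lf : V -> N) a b : LE par lf a b b.
Proof. by move=> w w' [_ _ H3] [H1 H2 _]; apply: H3. Qed.

Lemma core (V S : finType) (H H' : {set {set V}}) (sigma : V -> S) x v :
  v != x -> (forall y, y != x -> sigma y != sigma x) -> is_RBMG H sigma ->
  (forall a b, adj H' a b <->
     (a != x /\ b != x /\ adj H a b) \/ (a = x /\ b != x) \/ (a != x /\ b = x)) ->
  is_RBMG H' sigma.
Proof.
move=> vx Hsig [_ [N [r [par [lf [Hph Hadj]]]]]] Hadj'.
have [M [r' [par' [lf' [Hpre [HLE1 HLEx]]]]]] := surgery Hph vx.
have [N' [r'' [par'' [lf'' [Hph' HLE']]]]] := normalize erefl Hpre.
have colx : forall y b, b != x -> sigma y = sigma b -> y != x.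
  move=> y b bx E; apply/eqP => yx; subst y.
  by move: (Hsig b bx); rewrite E eqxx.
have bm : forall a b, a != x -> b != x ->
    (best_match par'' lf'' sigma a b <-> best_match par lf sigma a b).
  move=> a b ax bx; split => -[s Hb]; split => // y' Hy'.
    have := Hb y' Hy'; rewrite -/(LE _ _ _ _ _) HLE' HLE1 //; exact: colx Hy'.
  have := Hb y' Hy'; rewrite -/(LE _ _ _ _ _) => HH.
  rewrite -/(LE _ _ _ _ _) HLE' HLE1 //; exact: colx Hy'.
have bmx : forall b, b != x -> best_match par'' lf'' sigma x b.
  move=> b bx; split; first by apply/eqP; rewrite eq_sym; apply: Hsig.
  move=> y' Hy'; rewrite -/(LE _ _ _ _ _) HLE'; apply: HLEx => //; exact: colx Hy'.
have bmx2 : forall b, b != x -> best_match par'' lf'' sigma b x.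
  move=> b bx; split; first by apply/eqP; apply: Hsig.
  move=> y' Hy'.
  have -> : y' = x by apply/eqP; apply/negPn/negP => yx; move: (Hsig y' yx); rewrite Hy' eqxx.
  exact: LE_self.
have Hrbm : forall a b, adj H' a b <-> reciprocal_best_match par'' lf'' sigma a b.
  move=> a b; rewrite Hadj'.
  case: (a =P x) => [ax|/eqP ax]; case: (b =P x) => [bx|/eqP bx].
  - subst; split.
      by case=> [[]|[[_]|[]]].
    by case=> -[/(_ erefl)].
  - subst; split => _; last by right; left.
    by split; [apply: bmx | apply: bmx2].
  - subst; split => _; last by right; right.
    by split; [apply: bmx2 | apply: bmx].
  - split.
      case=> [[_ [_ /Hadj [B1 B2]]]|[[/eqP]|[_ /eqP]]]; rewrite ?(negbTE ax) ?(negbTE bx) //.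
      by split; apply/bm.
    by move=> [B1 B2]; left; split => //; split => //; apply/Hadj; split; apply/bm.
split.
  by move=> a b /Hrbm [[Hs _] _].
by exists N', r'', par'', lf''; split.
Qed.

Lemma pair_noteq (V : finType) (x a b : V) : a != x -> b != x -> x \notin [set a; b].
Proof. by move=> ax bx; rewrite !inE !(eq_sym x) (negbTE ax) (negbTE bx). Qed.

Lemma card_pair2 (V : finType) (a b : V) : #|[set a; b]| = 2 -> a != b.
Proof. by rewrite cards2 => -[]; case: (a != b). Qed.

Unset Implicit Arguments.
Set Strict Implicit.

Theorem mainTheorem5 (V S : finType) (E : {set {set V}}) (sigma : V -> S) (n : nat)
  (x : V) :
  simple_edges E ->
  properly_n_colored E sigma n ->
  hub_vertex E x ->
  (forall F, optimal_deletion_set E sigma n F -> forall v, [set x; v] \notin F) /\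
  (forall F, optimal_edit_set E sigma n F -> forall v, [set x; v] \notin F).
Proof.
move=> Hsimple [Hprop _] Hhub.
have Hsig : forall y, y != x -> sigma y != sigma x.
  move=> y yx; apply/eqP => E1; apply: (Hprop x y); last by rewrite E1.
  by apply: Hhub => E2; move: yx; rewrite E2 eqxx.
have hubE : forall b, b != x -> [set x; b] \in E.
  by move=> b bx; apply: Hhub => E2; move: bx; rewrite E2 eqxx.
have xxE : [set x; x] \notin E.
  by apply/negP => /Hsimple; rewrite cards2 eqxx.
have symm : forall a b : V, [set a; b] = [set b; a] by move=> a b; rewrite setUC.
set F' := fun F : {set {set V}} => [set e in F | x \notin e].
have F'same : forall F a b, a != x -> b != x -> ([set a; b] \in F' F) = ([set a; b] \in F).
  by move=> F a b ax bx; rewrite inE pair_noteq // andbT.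
have F'x : forall (F : {set {set V}}) (b : V), [set x; b] \notin F' F by move=> F b; rewrite inE set21 andbF.
have F'sub : forall F : {set {set V}}, F' F \subset F by move=> F; apply/subsetP => e; rewrite inE => /andP [].
have F'card : forall (F : {set {set V}}) (w : V), [set x; w] \in F -> #|F' F| < #|F|.
  move=> F w Hw; apply: proper_card; apply/properP; split => //.
  by exists [set x; w] => //; exact: F'x.
split.
- move=> F [[Hsub [HR Hn]] Hopt] w; apply/negP => Hw.
  have wx : w != x.
    have := Hsimple _ (subsetP Hsub _ Hw) => /card_pair2; by rewrite eq_sym.
  have : deletion_set E sigma n (F' F).
    split; first exact: subset_trans (F'sub F) Hsub.
    split => //; apply: (core wx Hsig HR) => a b; rewrite /adj !in_setD.
    have [->|ax] := eqVneq a x; have [->|bx] := eqVneq b x.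
    + rewrite (negbTE xxE) andbF ?eqxx; split => //; by case=> [[]|[[_]|[]]].
    + rewrite (hubE b bx) andbT (F'x F b); split => // _; by right; left.
    + rewrite symm (hubE a ax) andbT (F'x F a); split => // _; by right; right.
    + rewrite F'same //; split; first by move=> H; left.
      case=> [[_ [_ H]]|[[ax' _]|[_ bx']]] //.
        by move: ax; rewrite ax' eqxx.
      by move: bx; rewrite bx' eqxx.
  move=> /Hopt; rewrite leqNgt; move: (F'card F w Hw) => -> //.
- move=> F [[Hsz [HR Hn]] Hopt] w; apply/negP => Hw.
  have wx : w != x by have := Hsz _ Hw => /card_pair2; rewrite eq_sym.
  have : edit_set E sigma n (F' F).
    split; first by move=> e; rewrite inE => /andP [/Hsz].
    split => //; apply: (core wx Hsig HR) => a b; rewrite /adj !in_setU !in_setD.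
    have [->|ax] := eqVneq a x; have [->|bx] := eqVneq b x.
    + rewrite (negbTE xxE) (negbTE (F'x F x)) !andbF ?eqxx; split => //; by case=> [[]|[[_]|[]]].
    + rewrite (hubE b bx) (F'x F b); split => // _; by right; left.
    + rewrite symm (hubE a ax) (F'x F a); split => // _; by right; right.
    + rewrite !F'same //; split; first by move=> H; left.
      case=> [[_ [_ H]]|[[ax' _]|[_ bx']]] //.
        by move: ax; rewrite ax' eqxx.
      by move: bx; rewrite bx' eqxx.
  move=> /Hopt; rewrite leqNgt; move: (F'card F w Hw) => -> //.
Qed.
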